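(* For Lebesgue almost every $x\in[0,1]$ and for every $i\in\mathbb{N}$, $$\limsup_{n\to\infty}N_i(x,n)<+\infty,$$ i.e. each symbol $i\in\mathbb{N}$ occurs only finitely many times among the $\bar O^1$-symbols of $x$.
   Context: Every irrational $x\in(0,1)$ has a unique representation ($\bar O^1$-expansion) $$x=\sum_{k=1}^\infty\frac{(-1)^{k-1}}{g_1(g_1+g_2)\cdots(g_1+g_2+\dots+g_k)},\qquad g_k=g_k(x)\in\mathbb{N}=\{1,2,3,\dots\}.$$ The $g_k(x)$ are the $\bar O^1$-symbols of $x$, and $N_i(x,n)$ is the number of indices $k\in\{1,\dots,n\}$ with $g_k(x)=i$. *)

(* Defs.v *)
From HB Require Import structures.
From mathcomp Require Import all_boot all_order all_algebra.
From mathcomp Require Import all_classical all_reals all_analysis.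
Set Implicit Arguments. Unset Strict Implicit. Unset Printing Implicit Defensive.
Import Order.TTheory GRing.Theory Num.Theory.
Import numFieldNormedType.Exports.
Local Open Scope classical_set_scope.
Local Open Scope ring_scope.

(* A candidate sequence of Obar^1-symbols is g : nat -> nat; only the values
   g 1, g 2, ... are used (paper's indexing, k >= 1). *)

Definition oterm (R : realType) (g : nat -> nat) (k : nat) : R :=
  (-1) ^+ k.-1 /
  (\prod_(1 <= j < k.+1) (\sum_(1 <= m < j.+1) g m)%N%:R).

Definition is_Oexp (R : realType) (x : R) (g : nat -> nat) : Prop :=
  (forall k, (0 < k)%N -> (0 < g k)%N) /\
  (fun n : nat => \sum_(1 <= k < n.+1) oterm R g k) @ \oo --> x.

Definition Ncount (g : nat -> nat) (i n : nat) : nat :=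
  count (fun k => g k == i) (iota 1 n).

(* Main.v *)
Require Import Defs.
From HB Require Import structures.
From mathcomp Require Import all_boot all_order all_algebra.
From mathcomp Require Import all_classical all_reals all_analysis.
From mathcomp Require Import ring lra.
Import Order.TTheory GRing.Theory Num.Theory.
Import numFieldNormedType.Exports.
Local Open Scope classical_set_scope.
Local Open Scope ring_scope.
Set Implicit Arguments. Unset Strict Implicit. Unset Printing Implicit Defensive.
Section Fpart.
Variable R : realType.
Variable s : nat -> nat.
Hypothesis sinc : forall j, (s j < s j.+1)%N.

Fixpoint Fv (j N : nat) : R :=
  match N with 0%N => 0 | N.+1 => (1 - Fv j.+1 N) / (s j.+1)%:R end.

Lemma s_pos j : (0 < s j.+1)%N.
Proof. exact: leq_ltn_trans (leq0n _) (sinc j). Qed.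

Lemma sR_gt0 j : 0 < (s j.+1)%:R :> R.
Proof. by rewrite ltr0n s_pos. Qed.

Lemma prod_neq0 a b : (forall l, (0 < l)%N -> (0 < a)%N ->
  True) -> (0 < a)%N -> \prod_(a <= l < b) (s l)%:R != 0 :> R.
Proof.
move=> _ a0; rewrite prodf_seq_neq0; apply/allP => l; rewrite mem_index_iota.
case/andP => al _; case: l al => [|l] al; first by rewrite leqn0 in al; rewrite (eqP al) in a0.
by rewrite /= pnatr_eq0 -lt0n s_pos.
Qed.

Lemma Fv_step N j : Fv j N.+1 = Fv j N +
  (-1) ^+ N / \prod_(j.+1 <= l < (j + N).+2) (s l)%:R.
Proof.
elim: N j => [|N IH] j.
  by rewrite /= addn0 big_nat1 subr0 expr0 add0r.
have -> : Fv j N.+2 = (1 - Fv j.+1 N.+1)/(s j.+1)%:R by [].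
rewrite IH.
have -> : Fv j N.+1 = (1 - Fv j.+1 N)/(s j.+1)%:R by [].
rewrite (big_ltn (_ : j.+1 < (j + N.+1).+2)%N); last by rewrite !ltnS leq_addr.
have h1 := sR_gt0 j.
have h2 : \prod_(j.+2 <= l < (j + N.+1).+2) (s l)%:R != 0 :> R.
  exact: prod_neq0.
move: h2; set P := \prod_(j.+2 <= l < _) _ => h2.
rewrite addSnnS -/P exprS; field.
by rewrite h2 /= lt0r_neq0.
Qed.

Lemma Fv_bnd N j : 0 <= Fv j N <= 1 / (s j.+1)%:R.
Proof.
elim: N j => [|N IH] j /=.
  by rewrite lexx divr_ge0 ?ler0n.
have /andP[y0 y1] := IH j.+1.
have hb : 1 / (s j.+2)%:R <= 1 :> R.
  by rewrite ler_pdivrMr ?sR_gt0 // mul1r ler1n s_pos.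
have h1 := sR_gt0 j.
set a := (s j.+1)%:R in h1 *.
apply/andP; split; first by apply: divr_ge0; lra.
rewrite ler_pM2r ?invr_gt0 //; lra.
Qed.

Lemma Fv_low N j : (0 < N)%N -> 1 / ((s j.+1).+1)%:R <= Fv j N.
Proof.
case: N => // N _ /=.
have /andP[y0 y1] := Fv_bnd N j.+1.
have h1 := sR_gt0 j.
have hb : 1 / (s j.+2)%:R <= 1 / ((s j.+1).+1)%:R :> R.
  rewrite !mul1r lef_pV2 ?posrE ?ltr0n ?s_pos // ler_nat; exact: sinc.
have hc : ((s j.+1).+1)%:R = (s j.+1)%:R + 1 :> R by rewrite -natr1.
rewrite hc in hb *.
set a := (s j.+1)%:R : R in h1 hb hc *.
have e : (1 - 1 / (a + 1)) / a = 1 / (a + 1).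
  field; rewrite lt0r_neq0 //= gt_eqF //; lra.
rewrite -{1}e ler_pM2r ?invr_gt0 //; lra.
Qed.
End Fpart.
Definition ssum (g : nat -> nat) (j : nat) : nat := (\sum_(1 <= m < j.+1) g m)%N.

Lemma ssumS g j : ssum g j.+1 = (ssum g j + g j.+1)%N.
Proof. by rewrite /ssum big_nat_recr. Qed.

Lemma ssum0 g : ssum g 0 = 0%N.
Proof. by rewrite /ssum big_geq. Qed.

Lemma ssum_inc g : (forall k, (0 < k)%N -> (0 < g k)%N) -> forall j, (ssum g j < ssum g j.+1)%N.
Proof. by move=> gp j; rewrite ssumS -{1}[ssum g j]addn0 ltn_add2l gp. Qed.

Lemma partial_Fv (R : realType) g : (forall k, (0 < k)%N -> (0 < g k)%N) ->
  forall n, \sum_(1 <= k < n.+1) oterm R g k = Fv R (ssum g) 0 n.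
Proof.
move=> gp; elim => [|n IH]; first by rewrite big_geq.
rewrite big_nat_recr // IH (Fv_step _ (ssum_inc gp)) /oterm add0n.
by [].
Qed.
Lemma tele_le (R : realType) (t : nat -> R) : (forall k, t k.+1 <= t k) ->
  (forall k, 0 <= t k) -> (\sum_(k <oo) (t k - t k.+1)%:E <= (t 0%N)%:E)%E.
Proof.
move=> tdec tp.
apply: lime_le.
  by apply: is_cvg_nneseries => n _ _; rewrite lee_fin subr_ge0.
apply: nearW => n.
rewrite sumEFin lee_fin.
have -> : \sum_(0 <= k < n) (t k - t k.+1) = t 0%N - t n.
  rewrite (@telescope_sumr_eq _ _ _ (fun k => - t k)) //; first by rewrite opprK addrC.
  by move=> k _; rewrite opprK addrC.
have := tp n; lra.
Qed.

Fixpoint U (R : realType) (i n a : nat) (c d : R) : set R :=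
  match n with
  | 0%N => [set` `[Num.min (c + d / ((a + i).+1)%:R) (c + d / (a + i)%:R),
                 Num.max (c + d / ((a + i).+1)%:R) (c + d / (a + i)%:R)]]
  | n.+1 => \bigcup_k U i n (a + k).+1 (c + d / ((a + k).+1)%:R)
                      (- (d / ((a + k).+1)%:R))
  end.

Lemma U_meas (R : realType) i n : forall a (c d : R), measurable (U i n a c d).
Proof.
elim: n => [|n IH] a c d /=; first exact: measurable_itv.
by apply: bigcupT_measurable => k; exact: IH.
Qed.

Lemma maxminE (R : realType) (x y : R) : Num.max x y - Num.min x y = `|x - y|.
Proof.
by case: (lerP x y).
Qed.

Lemma U_base (R : realType) i a (c d : R) : (0 < i)%N ->
  (lebesgue_measure (U i 0 a c d) <= (`|d| / ((a.+1)%:R * (a.+2)%:R))%:E)%E.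
Proof.
move=> i0 /=; rewrite lebesgue_measure_itv /=.
case: ifP => _; last by rewrite lee_fin divr_ge0 // ?mulr_ge0.
rewrite -EFinD lee_fin.
have hA : ((a + i).+1)%:R = (a + i)%:R + 1 :> R by rewrite -natr1.
rewrite hA.
have Ai : (a.+1 <= a + i)%N by rewrite -addn1 leq_add2l.
have hA1 : (a.+1)%:R <= (a + i)%:R :> R by rewrite ler_nat.
have ha2 : (a.+2)%:R = (a.+1)%:R + 1 :> R by rewrite -natr1.
rewrite ha2.
have a1 : 0 < (a.+1)%:R :> R by rewrite ltr0n.
set A := (a + i)%:R : R in hA1 *.
set B := (a.+1)%:R : R in a1 hA1 *.
set p := c + d / (A + 1); set q := c + d / A.
rewrite maxminE.
have -> : p - q = - (d / (A * (A + 1))).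
  rewrite /p /q; field; apply/andP; split; apply: lt0r_neq0; lra.
rewrite normrN normrM normfV [`|A * (A + 1)|]ger0_norm; last by apply: mulr_ge0; lra.
apply: ler_wpM2l => //.
rewrite lef_pV2 ?posrE; first (apply: ler_pM; lra).
  apply: mulr_gt0; lra.
apply: mulr_gt0; lra.
Qed.

Lemma U_bnd (R : realType) i n : (0 < i)%N -> forall a (c d : R),
  (lebesgue_measure (U i n a c d) <=
     (`|d| / 2 ^+ n / ((a.+1)%:R * (a.+2)%:R))%:E)%E.
Proof.
move=> i0; elim: n => [|n IH] a c d.
  by rewrite expr0 divr1; apply: U_base.
have := measure_sigma_subadditive lebesgue_measure
  (fun k => U_meas i n (a + k).+1 (c + d / ((a + k).+1)%:R) (- (d / ((a + k).+1)%:R)))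
  (U_meas i n.+1 a c d) (@subset_refl _ _).
move/le_trans; apply.
set C := `|d| / 2 ^+ n / 2.
pose t k := C / (((a + k).+1)%:R * ((a + k).+2)%:R).
have tp k : 0 <= t k by rewrite /t /C !divr_ge0 ?mulr_ge0.
apply: (@le_trans _ _ (\sum_(k <oo) (t k - t k.+1)%:E)%E).
  apply: lee_nneseries => [k _ _|k _]; first exact: measure_ge0.
  apply: (le_trans (IH _ _ _)); rewrite lee_fin le_eqVlt; apply/orP; left; apply/eqP.
  rewrite /t addnS normrN normrM normfV [`|((a + k).+1)%:R|]ger0_norm //.
  rewrite /C -!natr1.
  have hm : 0 < (a + k)%:R + 1 :> R by rewrite natr1 ltr0n.
  set M := (a + k)%:R : R in hm *.
  have h2 : 0 < 2 ^+ n :> R by apply: exprn_gt0.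
  field; rewrite !lt0r_neq0 //; lra.
apply: le_trans; first apply: tele_le.
- move=> k; rewrite /t addnS; apply: ler_wpM2l; first by rewrite /C !divr_ge0.
  rewrite lef_pV2 ?posrE ?mulr_gt0 ?ltr0n //.
  by apply: ler_pM; rewrite ?ler0n // ler_nat.
- exact: tp.
rewrite lee_fin /t addn0 /C exprS le_eqVlt; apply/orP; left; apply/eqP.
have h2 : 0 < 2 ^+ n :> R by apply: exprn_gt0.
field; rewrite !lt0r_neq0 ?mulr_gt0 ?ltr0n //.
Qed.
Lemma affine_between (R : realType) (c d u v F : R) : u <= F <= v ->
  Num.min (c + d * u) (c + d * v) <= c + d * F <= Num.max (c + d * u) (c + d * v).
Proof.
case/andP => h1 h2; rewrite ge_min le_max.
case: (lerP 0 d) => hd; apply/andP; split; apply/orP.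
- by left; rewrite lerD2l; nra.
- by right; rewrite lerD2l; nra.
- by right; rewrite lerD2l; nra.
- by left; rewrite lerD2l; nra.
Qed.

Lemma U_mem (R : realType) (g : nat -> nat) (x : R) i :
  (forall k, (0 < k)%N -> (0 < g k)%N) ->
  forall n j (c d : R) (part : nat -> R),
  (forall N, part (j + N)%N = c + d * Fv R (ssum g) j N) ->
  g (j + n).+1 = i -> part @ \oo --> x -> U i n (ssum g j) c d x.
Proof.
move=> gp; have sinc := ssum_inc gp.
elim => [|n IH] j c d part hp hg hx.
- rewrite addn0 in hg.
  have hs : ssum g j.+1 = (ssum g j + i)%N by rewrite ssumS hg.
  rewrite /= in_itv /=.
  have ev : \forall N \near \oo,
      Num.min (c + d / ((ssum g j + i).+1)%:R) (c + d / (ssum g j + i)%:R) <= part N <=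
      Num.max (c + d / ((ssum g j + i).+1)%:R) (c + d / (ssum g j + i)%:R).
    exists j.+1 => // N /= hN.
    have -> : N = (j + (N - j))%N by rewrite subnKC // ltnW.
    rewrite hp; apply: affine_between.
    have := Fv_low R sinc j (_ : (0 < N - j)%N); rewrite subn_gt0 => /(_ hN).
    have := Fv_bnd R sinc (N - j) j.
    by rewrite hs !mul1r => /andP[_ ->] ->.
  have xl := cvg_lim (@Rhausdorff R) hx.
  apply/andP; split; rewrite -xl.
    apply: limr_ge; [exact: cvgP hx | by apply: filterS ev => N /andP[]].
  apply: limr_le; [exact: cvgP hx | by apply: filterS ev => N /andP[]].
- rewrite /=.
  exists (g j.+1).-1 => //.
  have -> : (ssum g j + (g j.+1).-1).+1 = ssum g j.+1.
    by rewrite ssumS -addnS prednK // gp.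
  apply: (IH j.+1 _ _ part) => //; last by rewrite addSnnS.
  move=> N; rewrite addSnnS hp.
  have -> : Fv R (ssum g) j N.+1 = (1 - Fv R (ssum g) j.+1 N) / (ssum g j.+1)%:R by [].
  have h := sR_gt0 R sinc j.
  field; exact: lt0r_neq0.
Qed.
Lemma esup_bnd (R : realType) (u : nat -> \bar R) (K : R) :
  (forall n, (u n <= K%:E)%E) -> (limn_esup u < +oo)%E.
Proof.
move=> uK; rewrite limn_esup_lim.
apply: (@le_lt_trans _ _ K%:E); last exact: ltry.
apply: lime_le; first exact: is_cvg_esups.
apply: nearW => n; apply: ge_ereal_sup => _ [m _ <-]; exact: uK.
Qed.

Lemma NcountS g i n : Ncount g i n.+1 = (Ncount g i n + (g n.+1 == i))%N.
Proof.
have e : iota 1 n.+1 = iota 1 n ++ [:: n.+1] by rewrite -(addn1 n) iotaD addnC.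
by rewrite /Ncount e count_cat /= addn0.
Qed.

Lemma Ncount_le g i M : (forall n, (M <= n)%N -> g n.+1 != i) ->
  forall n, (Ncount g i n <= M)%N.
Proof.
move=> h; elim => [|n IH]; first by [].
rewrite NcountS; case: (leqP M n) => hn.
  by rewrite (negbTE (h n hn)) addn0.
apply: leq_trans (_ : n + 1 <= M)%N; last by rewrite addn1.
apply: leq_add; last by case: (_ == _).
by rewrite /Ncount (leq_trans (count_size _ _)) // size_iota.
Qed.

Definition Zs (R : realType) i M : set R := \bigcup_k U i (M + k) 0 (0:R) 1.
Definition Ns (R : realType) i : set R := \bigcap_M @Zs R i M.

Lemma Zs_meas (R : realType) i M : measurable (@Zs R i M).
Proof. by apply: bigcupT_measurable => k; exact: U_meas. Qed.

Lemma Ns_meas (R : realType) i : measurable (@Ns R i).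
Proof. by apply: bigcapT_measurable => k; exact: Zs_meas. Qed.

Lemma Zs_bnd (R : realType) i M : (0 < i)%N ->
  (lebesgue_measure (@Zs R i M) <= (1 / 2 ^+ M)%:E)%E.
Proof.
move=> i0.
have := measure_sigma_subadditive lebesgue_measure
  (fun k => U_meas i (M + k) 0 (0:R) 1) (@Zs_meas R i M) (@subset_refl _ _).
move/le_trans; apply.
pose t k := 1 / (2:R) ^+ (M + k).
have h2 k : 0 < (2:R) ^+ k by apply: exprn_gt0.
apply: (@le_trans _ _ (\sum_(k <oo) (t k - t k.+1)%:E)%E).
  apply: lee_nneseries => [k _ _|k _]; first exact: measure_ge0.
  apply: (le_trans (U_bnd _ _ _ _ _)) => //.
  rewrite lee_fin /t addnS exprS normr1 le_eqVlt; apply/orP; left; apply/eqP.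
  have := h2 (M + k)%N; set P := (2:R) ^+ (M + k) => hP.
  field; rewrite lt0r_neq0 //.
apply: le_trans; first apply: tele_le.
- move=> k; rewrite /t addnS exprS !mul1r lef_pV2 ?posrE ?mulr_gt0 //.
  have := h2 (M + k)%N; lra.
- by move=> k; rewrite /t divr_ge0 ?ltW.
by rewrite /t addn0.
Qed.

Lemma Ns_null (R : realType) i : (0 < i)%N -> lebesgue_measure (@Ns R i) = 0%E.
Proof.
move=> i0; apply/eqP; rewrite eq_le measure_ge0 andbT.
apply/lee_addgt0Pr => e e0; rewrite add0e.
have ie : 0 < e^-1 by rewrite invr_gt0.
have hb := archi_boundP (ltW ie).
set M := Num.bound _ in hb.
apply: (le_trans (le_measure _ _ _ _)); last apply: (le_trans (@Zs_bnd R i M i0)).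
- by rewrite inE; exact: Ns_meas.
- by rewrite inE; exact: Zs_meas.
- exact: bigcap_inf.
rewrite lee_fin ler_pdivrMr ?exprn_gt0 //.
have hM : (M%:R : R) <= 2 ^+ M.
  by rewrite -natrX ler_nat ltnW // ltn_expl.
rewrite -[X in X <= _](mulfV (lt0r_neq0 e0)); apply/ltW; rewrite ltr_pM2l //.
exact: lt_le_trans hb hM.
Qed.
Theorem theorem6 (R : realType) :
  {ae (@lebesgue_measure R), forall x : R,
     x \in `[0, 1] ->
     forall g : nat -> nat, is_Oexp x g ->
     forall i : nat, (0 < i)%N ->
       (limn_esup (fun n : nat => ((Ncount g i n)%:R : R)%:E) < +oo)%E}.
Proof.
have key : forall x : R, ~ (\bigcup_i @Ns R i.+1) x ->
     x \in `[0, 1] ->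
     forall g : nat -> nat, is_Oexp x g ->
     forall i : nat, (0 < i)%N ->
       (limn_esup (fun n : nat => ((Ncount g i n)%:R : R)%:E) < +oo)%E.
  move=> x xN _ g [gp hx] i i0.
  case: (pselect (exists M, forall n, (M <= n)%N -> g n.+1 != i)) => [[M hM]|hn].
    apply: (@esup_bnd _ _ M%:R) => n; rewrite lee_fin ler_nat.
    exact: Ncount_le.
  exfalso; apply: xN; case: i i0 hn => // i _ hn.
  exists i => //= M _.
  have [n [hMn hg]] : exists n, (M <= n)%N /\ g n.+1 = i.+1.
    apply: contrapT => hc; apply: hn; exists M => n hMn; apply/eqP => he.
    by apply: hc; exists n.
  exists (n - M)%N => //.
  rewrite subnKC //.
  have := @U_mem R g x i.+1 gp n 0 0 1
    (fun n => \sum_(1 <= k < n.+1) oterm R g k).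
  rewrite ssum0; apply => //.
  by move=> N; rewrite add0n partial_Fv // add0r mul1r.
have neg : (@lebesgue_measure R).-negligible (\bigcup_i @Ns R i.+1).
  apply: negligible_bigcup => i; apply/negligibleP; first exact: Ns_meas.
  exact: Ns_null.
apply: (negligibleS _ neg) => x /= hx.
apply: contrapT => hN; apply: hx; exact: key.
Qed.
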